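(* Let $G$ be an additive group, let $X$ be a complete non-Archimedean normed space over a field $K$ with a non-trivial non-Archimedean valuation $|\cdot|$, and let $k$ be a fixed integer with $k\neq 0,\pm1$. For $f:G\to X$ put $$Df(x,y)=f(x+ky)+f(x-ky)-k^2f(x+y)-k^2f(x-y)-2(1-k^2)f(x).$$ Let $\varphi:G\times G\to[0,\infty)$, and for $u\in G$ write $$\Phi(u)=\max\{|2(k^2-1)|\varphi(u,u),\ |k^2|\varphi(2u,u),\ \varphi(u,2u),\ \varphi((k+1)u,u),\ \varphi((k-1)u,u),\ \varphi(u,u),\ |k^2|\varphi(2u,2u),\ |2(k^2-1)|\varphi(u,2u),\ \varphi(u,3u),\ \varphi((2k+1)u,u),\ \varphi((2k-1)u,u)\}.$$ Suppose that $$\lim_{n\to\infty}\frac{1}{|8^n|}\max\{\varphi(2^{n+1}x,2^{n+1}y),\ |2|\varphi(2^nx,2^ny)\}=0,\qquad \lim_{n\to\infty}\frac{1}{|8^nk^2(k^2-1)|}\Phi(2^{n-1}x)=0$$ for all $x,y\in G$, and that for each $x\in G$ the limit $$\tilde{\varphi}_C(x):=\lim_{n\to\infty}\max\Big\{\frac{1}{|8^i|}\Phi(2^{i-1}x):\ 0\le i<n\Big\}$$ exists. Suppose that $f:G\to X$ is an odd function satisfying $\|Df(x,y)\|\le\varphi(x,y)$ for all $x,y\in G$. Then there exists a cubic function $C:G\to X$ such that $$\|f(2x)-2f(x)-C(x)\|\le\frac{1}{|8k^2(k^2-1)|}\tilde{\varphi}_C(x)\qquad(x\in G).$$ Moreover,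 if $$\lim_{i\to\infty}\lim_{n\to\infty}\max\Big\{\frac{1}{|8^j|}\Phi(2^{j-1}x):\ i\le j<n+i\Big\}=0,$$ then $C$ is the unique cubic function satisfying this inequality.
   Context: A non-Archimedean norm satisfies $\|x\|=0\iff x=0$, $\|rx\|=|r|\|x\|$ and $\|x+y\|\le\max\{\|x\|,\|y\|\}$. In the proof, $h(x)=f(2x)-2f(x)$ and $C(x)=\lim_{n\to\infty}h(2^nx)/8^n$. *)

(* Defs.v *)
From HB Require Import structures.
From mathcomp Require Import all_boot all_order all_algebra.
From mathcomp Require Import all_classical all_reals all_analysis.
Set Implicit Arguments. Unset Strict Implicit. Unset Printing Implicit Defensive.
Import Order.TTheory GRing.Theory Num.Theory.
Local Open Scope ring_scope.

Definition nonarch_valuation (K : fieldType) (R : realType) (abs : K -> R) : Prop :=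
  [/\ (forall a, 0 <= abs a),
      (forall a, abs a = 0 <-> a = 0),
      (forall a b, abs (a * b) = abs a * abs b)
    & (forall a b, abs (a + b) <= Num.max (abs a) (abs b))].

Definition nontrivial_valuation (K : fieldType) (R : realType) (abs : K -> R) : Prop :=
  exists a : K, abs a <> 0 /\ abs a <> 1.

Definition nonarch_norm (K : fieldType) (R : realType) (abs : K -> R)
  (X : lmodType K) (nrm : X -> R) : Prop :=
  [/\ (forall x, 0 <= nrm x),
      (forall x, nrm x = 0 <-> x = 0),
      (forall (r : K) x, nrm (r *: x) = abs r * nrm x)
    & (forall x y, nrm (x + y) <= Num.max (nrm x) (nrm y))].

Definition norm_complete (R : realType) (X : zmodType) (nrm : X -> R) : Prop :=
  forall u : nat -> X,
    (forall e : R, 0 < e -> exists N : nat, forall m n : nat,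
        (N <= m)%N -> (N <= n)%N -> nrm (u m - u n) < e) ->
    exists l : X, forall e : R, 0 < e -> exists N : nat, forall n : nat,
        (N <= n)%N -> nrm (u n - l) < e.

Definition Dk (G X : zmodType) (k : int) (f : G -> X) (x y : G) : X :=
  f (x + y *~ k) + f (x - y *~ k) - f (x + y) *~ (k ^+ 2) - f (x - y) *~ (k ^+ 2)
  - f x *~ (2 * (1 - k ^+ 2)).

Definition cubic (G X : zmodType) (C : G -> X) : Prop :=
  forall x y : G, C (x *+ 2 + y) + C (x *+ 2 - y)
                  = C (x + y) *+ 2 + C (x - y) *+ 2 + C x *+ 12.

Definition Phi (G : zmodType) (K : fieldType) (R : realType) (abs : K -> R)
  (k : int) (phi : G -> G -> R) (u : G) : R :=
  let c1 := abs ((2 * (k ^+ 2 - 1))%:~R) in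
  let c2 := abs ((k ^+ 2)%:~R) in
  Num.max (c1 * phi u u)
  (Num.max (c2 * phi (u *+ 2) u)
  (Num.max (phi u (u *+ 2))
  (Num.max (phi (u *~ (k + 1)) u)
  (Num.max (phi (u *~ (k - 1)) u)
  (Num.max (phi u u)
  (Num.max (c2 * phi (u *+ 2) (u *+ 2))
  (Num.max (c1 * phi u (u *+ 2))
  (Num.max (phi u (u *+ 3))
  (Num.max (phi (u *~ (2 * k + 1)) u)
           (phi (u *~ (2 * k - 1)) u)))))))))).

Definition PhiMax (G : zmodType) (K : fieldType) (R : realType) (abs : K -> R)
  (k : int) (phi : G -> G -> R) (x : G) (i n : nat) : R :=
  \big[Num.max/0]_(i <= j < n + i)
     (Phi abs k phi (x *+ (2 ^ j)) / abs ((8 : K) ^+ j)).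

(* Main.v *)
Require Import Defs.
From HB Require Import structures.
From mathcomp Require Import all_boot all_order all_algebra.
From mathcomp Require Import all_classical all_reals all_analysis.
From mathcomp Require Import ring lra zify.
Import Order.TTheory GRing.Theory Num.Theory numFieldNormedType.Exports.
Local Open Scope classical_set_scope.
Local Open Scope ring_scope.

Section DN.
Variable V : zmodType.
Definition dn := (int * V)%type.
HB.instance Definition _ := GRing.Zmodule.on dn.
Definition dnmul (a b : dn) : dn := (a.1 * b.1, b.2 *~ a.1 + a.2 *~ b.1).
Definition dnone : dn := (1, 0).
Lemma dnmulA : associative dnmul.
Proof. move=> [a u] [b v] [c w]; rewrite /dnmul /=; congr pair; first by rewrite mulrA.
by rewrite !mulrzDl !mulrzA [w *~ b *~ a]mulrzAC [v *~ c *~ a]mulrzAC addrA. Qed.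
Lemma dnmulC : commutative dnmul.
Proof. by move=> [a u] [b v]; rewrite /dnmul /= mulrC addrC. Qed.
Lemma dnmul1 : left_id dnone dnmul.
Proof. by move=> [a u]; rewrite /dnmul /= mul1r mul0rz addr0 mulr1z. Qed.
Lemma dnmulDl : left_distributive dnmul +%R.
Proof. move=> [a u] [b v] [c w]; rewrite /dnmul /=; congr pair; first by rewrite mulrDl.
by rewrite mulrzDr mulrzDl addrACA. Qed.
Lemma dnone0 : dnone != 0.
Proof. by []. Qed.
HB.instance Definition _ := GRing.Zmodule_isComNzRing.Build dn dnmulA dnmulC dnmul1 dnmulDl dnone0.
Definition dni (v : V) : dn := (0, v).
Lemma dniD a b : dni (a + b) = dni a + dni b. Proof. by rewrite /dni; congr pair; rewrite addr0. Qed.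
Lemma dniN a : dni (- a) = - dni a. Proof. by rewrite /dni; congr pair; rewrite oppr0. Qed.
Lemma dniB a b : dni (a - b) = dni a - dni b. Proof. by rewrite dniD dniN. Qed.
Lemma natr_dn (m : nat) : (m%:R : dn) = (m%:R, 0).
Proof. elim: m => [//|m IH]; rewrite -addn1 !natrD IH /=. by congr pair; rewrite addr0. Qed.
Lemma intr_dn (n : int) : (n%:~R : dn) = (n, 0).
Proof. case: n => m; first by rewrite -pmulrn natr_dn natz.
rewrite NegzE intrN -pmulrn natr_dn (_ : - (m.+1%:R, 0) = (- m.+1%:R, - 0)) // oppr0 natz; reflexivity. Qed.
Lemma dniZ a (n : int) : dni (a *~ n) = n%:~R * dni a.
Proof. by rewrite intr_dn /dni /GRing.mul /= /dnmul /= mulr0 mul0rz addr0. Qed.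
Lemma dni0 : dni 0 = 0. Proof. by []. Qed.
Lemma dni_inj : injective dni. Proof. by move=> a b [->]. Qed.
End DN.
Arguments dni {V} v.
Arguments dni_inj {V}.



Lemma dniMn (V : zmodType) (a : V) n : dni (a *+ n) = n%:R * dni a.
Proof. by rewrite pmulrn dniZ. Qed.

Ltac zring V := apply: (@dni_inj V); rewrite ?(dniD, dniB, dniN, dniZ, dniMn, dni0); ring.

Section Diff.
Variables (G : zmodType) (K : fieldType) (X : lmodType K).
Implicit Types (h g : G -> X).

Definition dif (w : G) h : G -> X := fun x => h (x + w) - h x.

Lemma difC a b h : dif a (dif b h) = dif b (dif a h).
Proof. apply/funext => x; rewrite /dif (addrAC x a b); zring X. Qed.

Definition P g (c1 c2 c3 c4 : int) := forall x z1 z2 z3 z4 : G,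
  dif (z1 *~ c1) (dif (z2 *~ c2) (dif (z3 *~ c3) (dif (z4 *~ c4) g))) x = 0.

Lemma P12 g a b c d : P g a b c d -> P g b a c d.
Proof. by move=> H x z1 z2 z3 z4; rewrite difC; apply: H. Qed.
Lemma P23 g a b c d : P g a b c d -> P g a c b d.
Proof. by move=> H x z1 z2 z3 z4; rewrite [dif (z2 *~ c) _]difC; apply: H. Qed.
Lemma P34 g a b c d : P g a b c d -> P g a b d c.
Proof. by move=> H x z1 z2 z3 z4; rewrite [dif (z3 *~ d) _]difC; apply: H. Qed.

Lemma Pneg1 g a b c d : P g a b c d -> P g (- a) b c d.
Proof. by move=> H x z1 z2 z3 z4; rewrite mulrNz -mulNrz; apply: H. Qed.
Lemma Pscale1 g m a b c d : P g a b c d -> P g (a * m) b c d.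
Proof. by move=> H x z1 z2 z3 z4; rewrite mulrzA mulrzAC; apply: H. Qed.
Arguments Pscale1 {g} m {a b c d}.
Lemma Psub1 g a a' b c d : P g a b c d -> P g a' b c d -> P g (a - a') b c d.
Proof.
move=> H H' x z1 z2 z3 z4.
set R := dif (z2 *~ b) _.
have -> : dif (z1 *~ (a - a')) R x =
   dif (z1 *~ a) R (x - z1 *~ a') - dif (z1 *~ a') R (x - z1 *~ a').
  rewrite /dif subrK mulrzBr (addrC (z1 *~ a)) addrA; zring X.
by rewrite H H' subrr.
Qed.

Lemma Pneg2 g a b c d : P g a b c d -> P g a (- b) c d.
Proof. by move=> /P12 /Pneg1 /P12. Qed.
Lemma Pneg4 g a b c d : P g a b c d -> P g a b c (- d).
Proof. by move=> /P34 /P23 /P12 /Pneg1 /P12 /P23 /P34. Qed.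
Lemma Pscale2 g m a b c d : P g a b c d -> P g a (b * m) c d.
Proof. by move=> /P12 /(Pscale1 m) /P12. Qed.
Lemma Pscale3 g m a b c d : P g a b c d -> P g a b (c * m) d.
Proof. by move=> /P23 /P12 /(Pscale1 m) /P12 /P23. Qed.
Lemma Pscale4 g m a b c d : P g a b c d -> P g a b c (d * m).
Proof. by move=> /P34 /P23 /P12 /(Pscale1 m) /P12 /P23 /P34. Qed.
Arguments Pscale2 {g} m {a b c d}.
Arguments Pscale3 {g} m {a b c d}.
Arguments Pscale4 {g} m {a b c d}.
Lemma Pscale_1 g m a b c d : P g a b c d -> P g (m * a) b c d.
Proof. by rewrite mulrC; apply: Pscale1. Qed.
Lemma Psub2 g a b b' c d : P g a b c d -> P g a b' c d -> P g a (b - b') c d.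
Proof. by move=> /P12 H /P12 H'; apply: P12; apply: Psub1. Qed.

Arguments Psub1 {g a a' b c d}.
Arguments Psub2 {g a b b' c d}.
Arguments Pscale_1 {g} m {a b c d}.
Arguments P12 {g a b c d}.
Lemma difS h h' w : (forall u, h (u *+ 2) = h' u *+ 8) ->
  forall u, dif (w *+ 2) h (u *+ 2) = dif w h' u *+ 8.
Proof. by move=> H u; rewrite /dif -mulrnDl !H mulrnBl. Qed.

Arguments difS {h h' w}.
Lemma PH g a b c d : (forall u, g (u *+ 2) = g u *+ 8) -> (8 : K) != 0 ->
  P g (2 * a) (2 * b) (2 * c) (2 * d) -> P g a b c d.
Proof.
move=> Hg h8 H x z1 z2 z3 z4.
have := H (x *+ 2) z1 z2 z3 z4.
have e : forall (z : G) (e : int), z *~ (2 * e) = (z *~ e) *+ 2.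
  by move=> z e; rewrite mulrC mulrzA -pmulrn.
rewrite !e (difS (difS (difS (difS Hg)))) => /eqP.
by rewrite -scaler_nat scaler_eq0 (negbTE h8) /= => /eqP.
Qed.

Lemma P1111 g (k : int) : (forall u, g (u *+ 2) = g u *+ 8) -> (8 : K) != 0 ->
  P g k k 1 1 -> P g (k - 1) (k + 1) 2 1 -> P g 1 1 1 1.
Proof.
move=> Hg h8 A B.
have B' : P g (k + 1) (k - 1) 2 1 by apply: P12.
have A1 : P g k (k * (k + 1)) 2 1.
  by have := Pscale3 2 (Pscale2 (k + 1) A); rewrite mul1r.
have B1 : P g (k - 1) (k * (k + 1)) 2 1.
  by have := Pscale2 k B; rewrite (mulrC (k + 1)).
have C1 : P g 1 (k * (k + 1)) 2 1.
  by have := Psub1 A1 B1; rewrite (_ : k - (k - 1) = 1) //; ring.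
have A2 : P g k (k * (k - 1)) 2 1.
  by have := Pscale3 2 (Pscale2 (k - 1) A); rewrite mul1r.
have B2 : P g (k + 1) (k * (k - 1)) 2 1.
  by have := Pscale2 k B'; rewrite (mulrC (k - 1)).
have C2 : P g 1 (k * (k - 1)) 2 1.
  by have := Psub1 B2 A2; rewrite (_ : k + 1 - k = 1) //; ring.
have C3 : P g 1 (2 * k) 2 1.
  by have := Psub2 C1 C2; rewrite (_ : k * (k + 1) - k * (k - 1) = 2 * k) //; ring.
have C3' : P g (2 * k) 1 2 1 by apply: P12.
have D1 : P g 2 (k + 1) 2 1.
  have E1 : P g (2 * k) (k + 1) 2 1 by have := Pscale2 (k + 1) C3'; rewrite mul1r.
  have E2 : P g (2 * (k - 1)) (k + 1) 2 1 by apply: (Pscale_1 2).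
  by have := Psub1 E1 E2; rewrite (_ : 2 * k - 2 * (k - 1) = 2) //; ring.
have D2 : P g 2 (k - 1) 2 1.
  have E1 : P g (2 * k) (k - 1) 2 1 by have := Pscale2 (k - 1) C3'; rewrite mul1r.
  have E2 : P g (2 * (k + 1)) (k - 1) 2 1 by apply: (Pscale_1 2).
  by have := Psub1 E2 E1; rewrite (_ : 2 * (k + 1) - 2 * k = 2) //; ring.
have D3 : P g 2 2 2 1.
  by have := Psub2 D1 D2; rewrite (_ : k + 1 - (k - 1) = 2) //; ring.
have D4 : P g (2 * 1) (2 * 1) (2 * 1) (2 * 1).
  by have := Pscale4 2 D3; rewrite mulr1.
exact: PH D4.
Qed.
End Diff.
Arguments dif {G K X} w h _.
Arguments P {G K X} g c1 c2 c3 c4.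
Arguments P12 {G K X g a b c d}.
Arguments P23 {G K X g a b c d}.
Arguments P34 {G K X g a b c d}.
Arguments Pneg1 {G K X g a b c d}.
Arguments Pneg2 {G K X g a b c d}.
Arguments Pneg4 {G K X g a b c d}.
Arguments P1111 {G K X g k}.





Section Elim.
Variables (G : zmodType) (K : fieldType) (X : lmodType K).
Implicit Types (h g : G -> X).

Definition esum (s : seq (int * int * (G -> X))) (x y : G) : X :=
  \sum_(t <- s) t.2 (x + y *~ t.1.2) *~ t.1.1.
Definition estep (z : G) (b : int) (t : int * int * (G -> X)) :=
  (t.1, dif (z *~ (t.1.2 - b)) t.2).

Lemma elim_step s b : (forall x y, esum s x y = 0) ->
  forall z x y, esum (map (estep z b) s) x y = 0.
Proof.
move=> H z x y.
have <- : esum s (x - z *~ b) (y + z) - esum s x y = esum (map (estep z b) s) x y.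
  rewrite /esum big_map -sumrB; apply: eq_bigr => t _.
  rewrite /estep /dif /= -mulrzBl; congr (_ *~ _); congr (_ - _); congr t.2.
  rewrite mulrzDl mulrzBr; zring G.
by rewrite !H subrr.
Qed.

Lemma dif_0 h : dif 0 h = (fun=> 0).
Proof. by apply/funext => x; rewrite /dif addr0 subrr. Qed.
Lemma dif_zero (w : G) : dif w (fun=> (0 : X)) = (fun=> 0).
Proof. by apply/funext => x; rewrite /dif subrr. Qed.

Lemma Dk_esum (k : int) g x y : Dk k g x y =
  esum [:: (1, k, g); (1, - k, g); (- (k ^+ 2), 1, g); (- (k ^+ 2), -1, g);
          (- (2 * (1 - k ^+ 2)), 0, g)] x y.
Proof.
rewrite /esum !big_cons big_nil /Dk /= mulrNz mulr1z mulrN1z mulr0z addr0 !mulr1z.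
rewrite !mulrNz addr0; zring X.
Qed.

Lemma mulrz_eq0K (v : X) (n : int) : (n%:~R : K) != 0 -> v *~ n = 0 -> v = 0.
Proof. by move=> hn; rewrite -scaler_int => /eqP; rewrite scaler_eq0 (negbTE hn) /= => /eqP. Qed.

Lemma elimA (k : int) g : (forall x y, Dk k g x y = 0) ->
  ((- (2 * (1 - k ^+ 2)))%:~R : K) != 0 -> P g k k 1 1.
Proof.
move=> HD hk.
have H0 := fun x y => etrans (esym (Dk_esum k g x y)) (HD x y).
suff : P g 1 (-1) k (-k).
  by move=> /Pneg2 /Pneg4; rewrite !opprK => /P23 /P12 /P34 /P23.
move=> x z1 z2 z3 z4.
have := elim_step _ (-1) (elim_step _ 1 (elim_step _ (-k) (elim_step _ k H0 z4) z3) z2) z1 x 0.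
rewrite /esum /= !big_cons big_nil /estep /= !subrr !mulr0z !dif_0 !dif_zero.
rewrite !mul0rz !add0r !addr0 !opprK => /(mulrz_eq0K _ _ hk).
done.
Qed.

Lemma elimB (k : int) g : (forall x y, Dk k g x y = 0) ->
  ((- (k ^+ 2))%:~R : K) != 0 -> P g (k - 1) (k + 1) 2 1.
Proof.
move=> HD hk.
have H0 := fun x y => etrans (esym (Dk_esum k g x y)) (HD x y).
suff : P g 1 2 (k + 1) (1 - k).
  move=> /Pneg4; rewrite (_ : - (1 - k) = k - 1); last by ring.
  by move=> /P34 /P23 /P12 /P23 /P34 /P23.
move=> x z1 z2 z3 z4.
have := elim_step _ 0 (elim_step _ (-1) (elim_step _ (-k) (elim_step _ k H0 z4) z3) z2) z1 x 0.
rewrite /esum /= !big_cons big_nil /estep /= !subrr !mulr0z !dif_0 !dif_zero.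
rewrite !mul0rz !add0r !addr0 => /(mulrz_eq0K _ _ hk).
have e1 : (1 - -1 : int) = 2 by [].
have e2 : 1 - - k = k + 1 by ring.
by rewrite e1 e2.
Qed.

Lemma cubic_of g : (forall x, g (- x) = - g x) -> (forall u, g (u *+ 2) = g u *+ 8) ->
  P g 1 1 1 1 -> (2 : K) != 0 -> cubic g.
Proof.
move=> Hodd Hg H1 h2.
have g0 : g 0 = 0.
  have := Hodd 0; rewrite oppr0 => /eqP; rewrite -subr_eq0 opprK -mulr2n -scaler_nat.
  by rewrite scaler_eq0 (negbTE h2) => /eqP.
move=> x y.
have := H1 0 x x y (- y).
rewrite !mulr1z /dif !add0r !addrK -!mulr2n !Hodd g0 !Hg subrr g0 => E.
apply/eqP; rewrite -subr_eq0 -oppr_eq0; apply/eqP; rewrite -E. apply: (@dni_inj X); rewrite ?(dniD, dniB, dniN, dniZ, dniMn) (_ : dni (0:X) = 0) //. ring.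
Qed.
End Elim.





Section PhiId.
Variables (G : zmodType) (K : fieldType) (X : lmodType K).
Variables (k : int) (f : G -> X) (u : G).
Hypothesis fodd : forall x, f (- x) = - f x.
Hypothesis f0 : f 0 = 0.

Definition F2 (a b : int) := f (u *~ (a + b * k)).

Lemma DkF2 (a b c a1 a2 b1 b2 : int) : a1 = a + c -> a2 = a - c -> b1 = b + c -> b2 = b - c ->
  Dk k f (u *~ (a + b * k)) (u *~ c) =
  F2 a b1 + F2 a b2 - F2 a1 b *~ (k ^+ 2) - F2 a2 b *~ (k ^+ 2) - F2 a b *~ (2 * (1 - k ^+ 2)).
Proof.
move=> -> -> -> ->; rewrite /Dk /F2.
congr (f _ + f _ - f _ *~ _ - f _ *~ _ - _); zring G.
Qed.

Lemma F2odd a b a' b' : a' = - a -> b' = - b -> F2 a' b' = - F2 a b.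
Proof. by move=> -> ->; rewrite /F2 -fodd; congr f; zring G. Qed.
Lemma F200 : F2 0 0 = 0.
Proof. by rewrite /F2 mul0r addr0 mulr0z f0. Qed.

Lemma DkE x y x' y' : x = x' -> y = y' -> Dk k f x y = Dk k f x' y'.
Proof. by move=> -> ->. Qed.

Let D x y := Dk k f x y.
Let h v := f (v *+ 2) - f v *+ 2.

Lemma phi_identity :
  (h (u *+ 2) - h u *+ 8) *~ (k ^+ 2 * (k ^+ 2 - 1)) =
  D u (u *+ 3) - D (u *~ (2 * k + 1)) u + D (u *~ (2 * k - 1)) u
  - D (u *+ 2) (u *+ 2) *~ (k ^+ 2) - D (u *~ (k + 1)) u *~ 2 + D (u *~ (k - 1)) u *~ 2
  + D u (u *+ 2) *~ (2 * k ^+ 2) - D (u *+ 2) u *~ (2 * k ^+ 2)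
  + D u u *~ (4 * k ^+ 2 - 3).
Proof.
have E1 : D u (u *+ 3) = Dk k f (u *~ (1 + 0 * k)) (u *~ 3).
  by apply: DkE; zring G.
have E2 : D (u *~ (2 * k + 1)) u = Dk k f (u *~ (1 + 2 * k)) (u *~ 1).
  by apply: DkE; zring G.
have E3 : D (u *~ (2 * k - 1)) u = Dk k f (u *~ (-1 + 2 * k)) (u *~ 1).
  by apply: DkE; zring G.
have E4 : D (u *+ 2) (u *+ 2) = Dk k f (u *~ (2 + 0 * k)) (u *~ 2).
  by apply: DkE; zring G.
have E5 : D (u *~ (k + 1)) u = Dk k f (u *~ (1 + 1 * k)) (u *~ 1).
  by apply: DkE; zring G.
have E6 : D (u *~ (k - 1)) u = Dk k f (u *~ (-1 + 1 * k)) (u *~ 1).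
  by apply: DkE; zring G.
have E7 : D u (u *+ 2) = Dk k f (u *~ (1 + 0 * k)) (u *~ 2).
  by apply: DkE; zring G.
have E8 : D (u *+ 2) u = Dk k f (u *~ (2 + 0 * k)) (u *~ 1).
  by apply: DkE; zring G.
have E9 : D u u = Dk k f (u *~ (1 + 0 * k)) (u *~ 1).
  by apply: DkE; zring G.
rewrite E1 E2 E3 E4 E5 E6 E7 E8 E9.
rewrite (@DkF2 1 0 3 4 (-2) 3 (-3)) // (@DkF2 1 2 1 2 0 3 1) // (@DkF2 (-1) 2 1 0 (-2) 3 1) //.
rewrite (@DkF2 2 0 2 4 0 2 (-2)) // (@DkF2 1 1 1 2 0 2 0) // (@DkF2 (-1) 1 1 0 (-2) 2 0) //.
rewrite (@DkF2 1 0 2 3 (-1) 2 (-2)) // (@DkF2 2 0 1 3 1 1 (-1)) // (@DkF2 1 0 1 2 0 1 (-1)) //.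
rewrite (@F2odd (-1) 3 1 (-3)) // (@F2odd 2 0 (-2) 0) // (@F2odd (-2) 2 2 (-2)) //.
rewrite (@F2odd 1 0 (-1) 0) // (@F2odd (-1) 2 1 (-2)) // (@F2odd (-2) 1 2 (-1)) //.
rewrite (@F2odd (-1) 1 1 (-1)) // F200.
have H4 : f (u *+ 2 *+ 2) = F2 4 0 by rewrite /F2; congr f; zring G.
have H2 : f (u *+ 2) = F2 2 0 by rewrite /F2; congr f; zring G.
have H1 : f u = F2 1 0 by rewrite /F2; congr f; zring G.
rewrite /h H4 H2 H1.
zring X.
Qed.
End PhiId.



Section Norms.
Variables (R : realType) (K : fieldType) (abs : K -> R) (X : lmodType K) (nrm : X -> R).
Hypothesis hv : nonarch_valuation abs.
Hypothesis hn : nonarch_norm abs nrm.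

Lemma abs_ge0 a : 0 <= abs a. Proof. by case: hv. Qed.
Lemma abs_eq0 a : abs a = 0 <-> a = 0. Proof. by case: hv. Qed.
Lemma absM a b : abs (a * b) = abs a * abs b. Proof. by case: hv. Qed.
Lemma absD a b : abs (a + b) <= Num.max (abs a) (abs b). Proof. by case: hv. Qed.
Lemma abs1 : abs 1 = 1.
Proof.
have h1 : abs 1 != 0 by apply/eqP => /abs_eq0 /eqP; rewrite oner_eq0.
have := absM 1 1; rewrite mul1r => /eqP; rewrite -subr_eq0 -{1}(mulr1 (abs 1)) -mulrBr.
by rewrite mulf_eq0 (negbTE h1) /= subr_eq0 => /eqP <-.
Qed.
Lemma absN1 : abs (-1) = 1.
Proof.
have := absM (-1) (-1); rewrite mulrNN mulr1 abs1 => /esym /eqP.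
rewrite -expr2 sqrf_eq1 => /orP [/eqP //| /eqP e].
by have := abs_ge0 (-1); rewrite e ler0N1.
Qed.
Lemma absN a : abs (- a) = abs a. Proof. by rewrite -mulN1r absM absN1 mul1r. Qed.
Lemma abs_nat (n : nat) : abs n%:R <= 1.
Proof.
elim: n => [|n IH]; first by have /abs_eq0 -> : (0%:R : K) = 0 by []; exact: ler01.
rewrite -addn1 natrD; apply: le_trans (absD _ _) _; rewrite ge_max IH /= abs1 //.
Qed.
Lemma abs_int (n : int) : abs n%:~R <= 1.
Proof. by case: n => m; rewrite ?NegzE ?intrN ?absN -pmulrn abs_nat. Qed.
Lemma absX a n : abs (a ^+ n) = abs a ^+ n.
Proof. by elim: n => [|n IH]; rewrite ?expr0 ?abs1 // !exprS absM IH. Qed.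
Lemma absV a : abs (a^-1) = (abs a)^-1.
Proof.
have [->|a0] := eqVneq a 0; first by rewrite invr0 (proj2 (abs_eq0 0) erefl) invr0.
have : abs a * abs (a^-1) = 1 by rewrite -absM mulfV // abs1.
have ha : abs a != 0 by apply/eqP => /abs_eq0 /eqP; rewrite (negbTE a0).
by move=> e; rewrite -[RHS]mulr1 -e mulrA mulVf // mul1r.
Qed.
Lemma abs_gt0 a : a != 0 -> 0 < abs a.
Proof. by move=> a0; rewrite lt0r abs_ge0 andbT; apply/eqP => /abs_eq0 /eqP; rewrite (negbTE a0). Qed.

Lemma nrm_ge0 x : 0 <= nrm x. Proof. by case: hn. Qed.
Lemma nrm_eq0 x : nrm x = 0 <-> x = 0. Proof. by case: hn. Qed.
Lemma nrmZ r x : nrm (r *: x) = abs r * nrm x. Proof. by case: hn. Qed.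
Lemma nrmD x y : nrm (x + y) <= Num.max (nrm x) (nrm y). Proof. by case: hn. Qed.
Lemma nrm0 : nrm 0 = 0. Proof. by apply/nrm_eq0. Qed.
Lemma nrmN x : nrm (- x) = nrm x. Proof. by rewrite -scaleN1r nrmZ absN1 mul1r. Qed.
Lemma nrmB x y : nrm (x - y) = nrm (y - x). Proof. by rewrite -nrmN opprB. Qed.
Lemma nrmz x (n : int) : nrm (x *~ n) <= nrm x.
Proof. by rewrite -scaler_int nrmZ ler_piMl ?nrm_ge0 ?abs_int. Qed.
Lemma nrm_addle M x y : nrm x <= M -> nrm y <= M -> nrm (x + y) <= M.
Proof. by move=> hx hy; apply: le_trans (nrmD _ _) _; rewrite ge_max hx hy. Qed.
Lemma nrm_addlt M x y : nrm x < M -> nrm y < M -> nrm (x + y) < M.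
Proof. by move=> hx hy; apply: le_lt_trans (nrmD _ _) _; rewrite gt_max hx hy. Qed.
Lemma nrm_suble M x y : nrm x <= M -> nrm y <= M -> nrm (x - y) <= M.
Proof. by move=> hx hy; apply: nrm_addle; rewrite ?nrmN. Qed.
Lemma nrm_sublt M x y : nrm x < M -> nrm y < M -> nrm (x - y) < M.
Proof. by move=> hx hy; apply: nrm_addlt; rewrite ?nrmN. Qed.
Lemma nrm_tri M x y z : nrm (x - y) < M -> nrm (y - z) < M -> nrm (x - z) < M.
Proof. move=> h1 h2; have -> : x - z = (x - y) + (y - z) by rewrite addrA subrK.
by apply: nrm_addlt. Qed.

Definition islim (a : nat -> X) (l : X) :=
  forall e : R, 0 < e -> exists N : nat, forall n, (N <= n)%N -> nrm (a n - l) < e.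

Lemma islim_uniq a l l' : islim a l -> islim a l' -> l = l'.
Proof.
move=> H H'; apply/eqP; rewrite -subr_eq0; apply/eqP/nrm_eq0.
apply/eqP; rewrite eq_le nrm_ge0 andbT; apply/ler_addgt0Pr => e e0.
rewrite add0r.
have [N HN] := H e e0; have [N' HN'] := H' e e0.
have /HN h1 : (N <= maxn N N')%N by rewrite leq_maxl.
have /HN' h2 : (N' <= maxn N N')%N by rewrite leq_maxr.
apply/ltW; apply: (nrm_tri _ _ (a (maxn N N'))); [by rewrite nrmB | exact: h2].
Qed.
Lemma islimD a b l l' : islim a l -> islim b l' -> islim (fun n => a n + b n) (l + l').
Proof.
move=> H H' e e0; have [N HN] := H e e0; have [N' HN'] := H' e e0.
exists (maxn N N') => n hnn.
rewrite (_ : a n + b n - (l + l') = (a n - l) + (b n - l')); last by rewrite opprD addrACA.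
apply: nrm_addlt; [apply: HN | apply: HN']; apply: leq_trans _ hnn.
  exact: leq_maxl.
exact: leq_maxr.
Qed.
Lemma islimN a l : islim a l -> islim (fun n => - a n) (- l).
Proof. by move=> H e e0; have [N HN] := H e e0; exists N => n /HN; rewrite -opprD nrmN. Qed.
Lemma islimB a b l l' : islim a l -> islim b l' -> islim (fun n => a n - b n) (l - l').
Proof. by move=> H H'; apply: islimD => //; apply: islimN. Qed.
Lemma islimz a l (m : int) : islim a l -> islim (fun n => a n *~ m) (l *~ m).
Proof. by move=> H e e0; have [N HN] := H e e0; exists N => n /HN; rewrite -mulrzBl; apply: le_lt_trans (nrmz _ _). Qed.
Lemma islimS a l : islim a l -> islim (fun n => a n.+1) l.
Proof. by move=> H e e0; have [N HN] := H e e0; exists N => n hnn; apply: HN; apply: leq_trans hnn _. Qed.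
Lemma islim_ext a b l : (forall n, a n = b n) -> islim a l -> islim b l.
Proof. by move=> E H e e0; have [N HN] := H e e0; exists N => n; rewrite -E; apply: HN. Qed.
End Norms.





Lemma bigmax_recr (R : realType) (F : nat -> R) m n : (m <= n)%N -> (forall i, 0 <= F i) ->
  \big[Num.max/0]_(m <= i < n.+1) F i = Num.max (\big[Num.max/0]_(m <= i < n) F i) (F n).
Proof.
move=> hmn F0; rewrite -(subnKC hmn); move: (n - m)%N => d; clear hmn; elim: d m => [|d IH] m.
  rewrite addn0 big_ltn // !big_geq //.
  by rewrite (max_l (F0 _)) (max_r (F0 _)).
rewrite big_ltn ?ltnS ?leq_addr // addnS -addSn IH maxA -big_ltn //.
by rewrite addSn ltnS leq_addr.
Qed.

Section Main.
Variables (G : zmodType) (R : realType) (K : fieldType) (abs : K -> R)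
  (X : lmodType K) (nrm : X -> R) (k : int) (phi : G -> G -> R) (f : G -> X).
Hypothesis hv : nonarch_valuation abs.
Hypothesis hn : nonarch_norm abs nrm.
Hypothesis hm : ((k ^+ 2 * (k ^+ 2 - 1))%:~R != 0 :> K).
Hypothesis hphi : forall x y, 0 <= phi x y.
Hypothesis fodd : forall x : G, f (- x) = - f x.
Hypothesis hD : forall x y : G, nrm (Dk k f x y) <= phi x y.

Let abs_ge0 := @abs_ge0 R K abs hv.
Let abs_eq0 := @abs_eq0 R K abs hv.
Let absM := @absM R K abs hv.
Let abs1 := @abs1 R K abs hv.
Let abs_int := @abs_int R K abs hv.
Let absX := @absX R K abs hv.
Let absV := @absV R K abs hv.
Let abs_gt0 := @abs_gt0 R K abs hv.
Let nrm_ge0 := @nrm_ge0 R K abs X nrm hn.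
Let nrm_eq0 := @nrm_eq0 R K abs X nrm hn.
Let nrmZ := @nrmZ R K abs X nrm hn.
Let nrmD := @nrmD R K abs X nrm hn.
Let nrm0 := @nrm0 R K abs X nrm hn.
Let nrmN := @nrmN R K abs X nrm hv hn.
Let nrmB := @nrmB R K abs X nrm hv hn.
Let nrmz := @nrmz R K abs X nrm hv hn.
Let nrm_addle := @nrm_addle R K abs X nrm hn.
Let nrm_addlt := @nrm_addlt R K abs X nrm hn.
Let nrm_suble := @nrm_suble R K abs X nrm hv hn.
Let nrm_sublt := @nrm_sublt R K abs X nrm hv hn.
Let nrm_tri := @nrm_tri R K abs X nrm hn.
Let islim := @islim R K X nrm.
Let islim_uniq {a l l'} := @islim_uniq R K abs X nrm hv hn a l l'.
Let islimD {a b l l'} := @islimD R K abs X nrm hn a b l l'.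
Let islimN {a l} := @islimN R K abs X nrm hv hn a l.
Let islimB {a b l l'} := @islimB R K abs X nrm hv hn a b l l'.
Let islimz {a l} m := @islimz R K abs X nrm hv hn a l m.
Let islimS {a l} := @islimS R K X nrm a l.
Let islim_ext {a b l} := @islim_ext R K X nrm a b l.

Lemma two_neq0 : (2 : K) != 0.
Proof.
apply/negP => /eqP e2; move/negP: hm; apply.
have ek : (k%:~R : K) = (k %% 2)%Z%:~R.
  by rewrite {1}(divz_eq k 2) intrD intrM (_ : (2%:~R : K) = 2) // e2 mulr0 add0r.
have [e|e] : (k %% 2 = 0)%Z \/ (k %% 2 = 1)%Z by lia.
  by rewrite intrM !rmorphXn /= ek e mulr0z expr0n mul0r.
by rewrite intrM intrB !rmorphXn /= ek e ?mulr1z expr1n ?mulr1z subrr mulr0.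
Qed.
Lemma eight_neq0 : (8 : K) != 0.
Proof. by rewrite (_ : (8 : K) = 2 * 2 * 2) ?mulf_neq0 ?two_neq0 //; ring. Qed.
Lemma k2_neq0 : ((k ^+ 2)%:~R : K) != 0.
Proof. by move: hm; rewrite intrM mulf_eq0 negb_or => /andP []. Qed.
Lemma k21_neq0 : ((k ^+ 2 - 1)%:~R : K) != 0.
Proof. by move: hm; rewrite intrM mulf_eq0 negb_or => /andP []. Qed.
Lemma hk1 : ((- (2 * (1 - k ^+ 2)))%:~R : K) != 0.
Proof.
rewrite (_ : - (2 * (1 - k ^+ 2)) = 2 * (k ^+ 2 - 1)); last by ring.
by rewrite intrM mulf_neq0 ?two_neq0 ?k21_neq0.
Qed.
Lemma hk2 : ((- (k ^+ 2))%:~R : K) != 0.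
Proof. by rewrite intrN oppr_eq0 k2_neq0. Qed.

Lemma f0 : f 0 = 0.
Proof.
have := fodd 0; rewrite oppr0 => /eqP; rewrite -subr_eq0 opprK -mulr2n -scaler_nat.
by rewrite scaler_eq0 (negbTE two_neq0) => /eqP.
Qed.

Definition h (v : G) := f (v *+ 2) - f v *+ 2.
Lemma hodd v : h (- v) = - h v.
Proof. by rewrite /h mulNrn !fodd; zring X. Qed.

Lemma Phi_ge u a b : phi a b \in [:: phi u (u *+ 3); phi (u *~ (2 * k + 1)) u;
  phi (u *~ (2 * k - 1)) u; phi (u *~ (k + 1)) u; phi (u *~ (k - 1)) u;
  phi u (u *+ 2); phi u u] -> phi a b <= Phi abs k phi u.
Proof.
rewrite !inE => /orP[/eqP->|/orP[/eqP->|/orP[/eqP->|/orP[/eqP->|/orP[/eqP->|/orP[/eqP->|/eqP->]]]]]];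
by rewrite /Phi !le_max lexx ?orbT.
Qed.
Lemma Phi_ge2 u : (abs ((k ^+ 2)%:~R) * phi (u *+ 2) (u *+ 2) <= Phi abs k phi u) /\
  (abs ((k ^+ 2)%:~R) * phi (u *+ 2) u <= Phi abs k phi u).
Proof. by split; rewrite /Phi !le_max lexx ?orbT. Qed.
Lemma Phi_ge0 u : 0 <= Phi abs k phi u.
Proof. by apply: le_trans (hphi u u) _; apply: Phi_ge; rewrite !inE eqxx ?orbT. Qed.

Lemma KB u : nrm (h (u *+ 2) - h u *+ 8) <= Phi abs k phi u / abs ((k ^+ 2 * (k ^+ 2 - 1))%:~R).
Proof.
have am : 0 < abs ((k ^+ 2 * (k ^+ 2 - 1))%:~R : K) by apply: abs_gt0.
rewrite ler_pdivlMr // mulrC -nrmZ scaler_int.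
have := phi_identity _ _ _ k f u fodd f0; rewrite /h => ->.
have b0 : forall a b, phi a b \in [:: phi u (u *+ 3); phi (u *~ (2 * k + 1)) u;
  phi (u *~ (2 * k - 1)) u; phi (u *~ (k + 1)) u; phi (u *~ (k - 1)) u;
  phi u (u *+ 2); phi u u] -> nrm (Dk k f a b) <= Phi abs k phi u.
  by move=> a b hab; apply: le_trans (hD a b) (@Phi_ge u a b hab).
have bz : forall a b (n : int), nrm (Dk k f a b) <= Phi abs k phi u -> nrm (Dk k f a b *~ n) <= Phi abs k phi u.
  by move=> a b n hb; apply: le_trans (nrmz _ _) hb.
have [c1 c2] := Phi_ge2 u.
have b4 : nrm (Dk k f (u *+ 2) (u *+ 2) *~ (k ^+ 2)) <= Phi abs k phi u.
  rewrite -scaler_int nrmZ; apply: le_trans c1; apply: ler_wpM2l; [exact: abs_ge0 | exact: hD].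
have b8 : nrm (Dk k f (u *+ 2) u *~ (2 * k ^+ 2)) <= Phi abs k phi u.
  rewrite -scaler_int nrmZ intrM absM; apply: le_trans c2.
  rewrite -mulrA mulrCA; apply: ler_wpM2l; first exact: abs_ge0.
  apply: le_trans (hD (u *+ 2) u); apply: ler_piMl; [exact: nrm_ge0 | exact: abs_int].
have bb : forall a b, phi a b \in [:: phi u (u *+ 3); phi (u *~ (2 * k + 1)) u;
  phi (u *~ (2 * k - 1)) u; phi (u *~ (k + 1)) u; phi (u *~ (k - 1)) u;
  phi u (u *+ 2); phi u u] -> forall n : int, nrm (Dk k f a b *~ n) <= Phi abs k phi u.
  by move=> a b hab n; apply: bz; apply: b0.
apply: nrm_addle; last by apply: bb; rewrite !inE eqxx ?orbT.
apply: nrm_addle; last by rewrite nrmN.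
apply: nrm_addle; last by apply: bb; rewrite !inE eqxx ?orbT.
apply: nrm_addle; last by apply: bb; rewrite !inE eqxx ?orbT.
apply: nrm_addle; last by rewrite nrmN; apply: bb; rewrite !inE eqxx ?orbT.
apply: nrm_addle; last by rewrite nrmN.
apply: nrm_addle; last by apply: b0; rewrite !inE eqxx ?orbT.
apply: nrm_addle; first by apply: b0; rewrite !inE eqxx ?orbT.
by rewrite nrmN; apply: b0; rewrite !inE eqxx ?orbT.
Qed.

Definition mm := k ^+ 2 * (k ^+ 2 - 1).
Definition BB := abs ((8 * k ^+ 2 * (k ^+ 2 - 1))%:~R : K).
Lemma BB_eq : BB = abs (8 : K) * abs (mm%:~R).
Proof. by rewrite /BB /mm -mulrA intrM absM. Qed.
Lemma am_gt0 : 0 < abs (mm%:~R : K). Proof. exact: abs_gt0 hm. Qed.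
Lemma a8_gt0 : 0 < abs (8 : K). Proof. exact: abs_gt0 eight_neq0. Qed.
Lemma BB_gt0 : 0 < BB. Proof. by rewrite BB_eq mulr_gt0 ?am_gt0 ?a8_gt0. Qed.
Lemma a8n_gt0 n : 0 < abs ((8 : K) ^+ n). Proof. by apply: abs_gt0; rewrite expf_neq0 // eight_neq0. Qed.

Definition s n x := (((8 : K) ^+ n)^-1) *: h (x *+ (2 ^ n)).

Lemma s0 x : s 0 x = h x.
Proof. by rewrite /s expr0 invr1 scale1r expn0 mulr1n. Qed.

Lemma inv8S n : (((8 : K) ^+ n)^-1) = (((8 : K) ^+ n.+1)^-1) * 8.
Proof. by rewrite exprSr invfM -mulrA mulVf ?mulr1 // eight_neq0. Qed.

Lemma s_step n x : s n.+1 x - s n x =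
  (((8 : K) ^+ n.+1)^-1) *: (h ((x *+ (2 ^ n)) *+ 2) - h (x *+ (2 ^ n)) *+ 8).
Proof.
rewrite /s [in RHS]scalerBr; congr (_ - _); first by rewrite expnSr mulrnA.
by rewrite -scaler_nat scalerA inv8S.
Qed.

Lemma step_bound n x : nrm (s n.+1 x - s n x) <=
  Phi abs k phi (x *+ (2 ^ n)) / abs ((8 : K) ^+ n.+1 * (k ^+ 2 * (k ^+ 2 - 1))%:~R).
Proof.
rewrite s_step nrmZ absV absM invfM mulrCA; apply: ler_wpM2l; last exact: KB.
by rewrite invr_ge0 abs_ge0.
Qed.

Definition Tm x j := Phi abs k phi (x *+ (2 ^ j)) / abs ((8 : K) ^+ j).
Lemma Tm_ge0 x j : 0 <= Tm x j.
Proof. by rewrite /Tm divr_ge0 ?Phi_ge0 ?abs_ge0. Qed.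

Lemma tau_eq n x : Phi abs k phi (x *+ (2 ^ n)) / abs ((8 : K) ^+ n.+1 * (k ^+ 2 * (k ^+ 2 - 1))%:~R)
  = Tm x n / BB.
Proof. by rewrite /Tm BB_eq /mm exprSr !absM !invfM !mulrA. Qed.

Lemma PhiMax0S x n : PhiMax abs k phi x 0 n.+1 = Num.max (PhiMax abs k phi x 0 n) (Tm x n).
Proof. by rewrite /PhiMax !addn0 bigmax_recr //; apply: Tm_ge0. Qed.
Lemma PhiMax00 x : PhiMax abs k phi x 0 0 = 0.
Proof. by rewrite /PhiMax big_geq. Qed.
Lemma PhiMax_ge0 x i n : 0 <= PhiMax abs k phi x i n.
Proof.
rewrite /PhiMax; elim: n => [|n IH]; first by rewrite add0n big_geq.
by rewrite addSn bigmax_recr ?leq_addl // ?le_max ?IH //; apply: Tm_ge0.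
Qed.

Lemma chain n x : nrm (s n x - h x) <= PhiMax abs k phi x 0 n / BB.
Proof.
have iB : 0 <= BB^-1 by rewrite invr_ge0 ltW ?BB_gt0.
elim: n => [|n IH]; first by rewrite s0 subrr nrm0 PhiMax00 mul0r.
rewrite PhiMax0S (_ : s n.+1 x - h x = (s n.+1 x - s n x) + (s n x - h x)); last first.
  by rewrite addrA subrK.
apply: nrm_addle.
  apply: le_trans (step_bound n x) _; rewrite tau_eq; apply: ler_wpM2r => //.
  by rewrite le_max lexx orbT.
apply: le_trans IH _; apply: ler_wpM2r => //; by rewrite le_max lexx.
Qed.

Lemma Dk_scale (g : G -> X) (r : K) (N : nat) x y :
  Dk k (fun v => r *: g (v *+ N)) x y = r *: Dk k g (x *+ N) (y *+ N).
Proof.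
rewrite /Dk.
have e1 : (x + y *~ k) *+ N = x *+ N + (y *+ N) *~ k by zring G.
have e2 : (x - y *~ k) *+ N = x *+ N - (y *+ N) *~ k by zring G.
have e3 : (x + y) *+ N = x *+ N + y *+ N by zring G.
have e4 : (x - y) *+ N = x *+ N - y *+ N by zring G.
by rewrite e1 e2 e3 e4 !scalerMzr !scalerBr !scalerDr.
Qed.

Lemma Dk_h a b : Dk k h a b = Dk k f (a *+ 2) (b *+ 2) - Dk k f a b *+ 2.
Proof.
rewrite /Dk /h.
have e1 : (a + b *~ k) *+ 2 = a *+ 2 + (b *+ 2) *~ k by zring G.
have e2 : (a - b *~ k) *+ 2 = a *+ 2 - (b *+ 2) *~ k by zring G.
have e3 : (a + b) *+ 2 = a *+ 2 + b *+ 2 by zring G.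
have e4 : (a - b) *+ 2 = a *+ 2 - b *+ 2 by zring G.
rewrite e1 e2 e3 e4; zring X.
Qed.

Lemma real_maxle (a b : R) : 0 <= b -> (forall e, 0 < e -> a <= Num.max b e) -> a <= b.
Proof.
move=> b0 H; rewrite leNgt; apply/negP => hab.
have e0 : 0 < (a + b) / 2 by rewrite divr_gt0 //; lra.
have := H _ e0; rewrite le_max => /orP [|]; lra.
Qed.

Hypothesis hc : norm_complete nrm.
Hypothesis H1 : forall x y : G,
     (fun n : nat => Num.max (phi (x *+ (2 ^ n.+1)) (y *+ (2 ^ n.+1)))
                             (abs (2 : K) * phi (x *+ (2 ^ n)) (y *+ (2 ^ n)))
                     / abs ((8 : K) ^+ n)) @ \oo --> 0.
Hypothesis H2 : forall x : G,
     (fun n : nat => Phi abs k phi (x *+ (2 ^ n))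
                     / abs ((8 : K) ^+ n.+1 * (k ^+ 2 * (k ^+ 2 - 1))%:~R))
       @ \oo --> 0.
Hypothesis H3 : forall x : G, cvg ((fun n : nat => PhiMax abs k phi x 0 n) @ \oo).

Lemma small_seq (u : nat -> R) : u @ \oo --> 0 -> forall e, 0 < e ->
  exists N, forall n, (N <= n)%N -> u n < e.
Proof.
move=> hu e e0; move/cvgr_dist_lt: hu => /(_ e e0) [N _ HN].
exists N => n /HN /=; rewrite sub0r normrN; apply: le_lt_trans; exact: ler_norm.
Qed.

Lemma cauchy x e : 0 < e -> exists N, forall n d, (N <= n)%N -> nrm (s (n + d) x - s n x) < e.
Proof.
move=> e0; have [N HN] := small_seq _ (H2 x) e e0; exists N => n d hnN.
elim: d => [|d IH]; first by rewrite addn0 subrr nrm0.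
rewrite addnS (_ : s (n + d).+1 x - s n x = (s (n + d).+1 x - s (n + d) x) + (s (n + d) x - s n x)).
  apply: nrm_addlt => //; apply: le_lt_trans (step_bound _ _) _; apply: HN.
  by apply: leq_trans hnN _; apply: leq_addr.
by rewrite addrA subrK.
Qed.

Lemma exC : {C : G -> X | forall x, islim (fun n => s n x) (C x)}.
Proof.
have /boolp.choice [C HC] : forall x, exists l, islim (fun n => s n x) l.
  move=> x; apply: hc => e e0.
  have [N HN] := cauchy x e e0; exists N => m n hmN hnN.
  case: (leqP m n) => hmn.
    by rewrite nrmB -(subnKC hmn); apply: HN.
  by rewrite -(subnKC (ltnW hmn)); apply: HN.
by exists C.
Qed.

Variable C : G -> X.
Hypothesis HC : forall x, islim (fun n => s n x) (C x).

Lemma C2 u : C (u *+ 2) = C u *+ 8.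
Proof.
rewrite pmulrn; apply: islim_uniq (HC (u *+ 2)) _.
apply: islim_ext (islimz 8 (islimS (HC u))) => n /=.
rewrite /s -scaler_int scalerA -mulrnA -expnS; congr (_ *: _).
by rewrite (_ : (8%:~R : K) = 8) // [RHS]inv8S mulrC.
Qed.

Lemma Codd x : C (- x) = - C x.
Proof.
apply: islim_uniq (HC (- x)) _.
apply: islim_ext (islimN (HC x)) => n /=.
by rewrite /s mulNrn hodd scalerN.
Qed.

Lemma CD x y : Dk k C x y = 0.
Proof.
have L1 : islim (fun n => Dk k (s n) x y) (Dk k C x y).
  have L := islimB (islimB (islimB (islimD (HC (x + y *~ k)) (HC (x - y *~ k)))
     (islimz (k ^+ 2) (HC (x + y)))) (islimz (k ^+ 2) (HC (x - y))))
     (islimz (2 * (1 - k ^+ 2)) (HC x)).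
  exact: (islim_ext (fun n => erefl) L).
have L0 : islim (fun n => Dk k (s n) x y) 0.
  move=> e e0; have [N HN] := small_seq _ (H1 x y) e e0; exists N => n /HN; apply: le_lt_trans.
  rewrite subr0 /s Dk_scale nrmZ absV Dk_h mulrC; apply: ler_wpM2r.
    by rewrite invr_ge0 abs_ge0.
  apply: nrm_suble.
    by rewrite -!mulrnA -!expnSr le_max hD.
  rewrite -scaler_nat nrmZ le_max; apply/orP; right.
  apply: ler_wpM2l; [exact: abs_ge0 | exact: hD].
exact: islim_uniq L1 L0.
Qed.

Lemma Ccubic : cubic C.
Proof.
apply: (cubic_of _ _ _ C Codd C2 _ two_neq0).
exact: (P1111 C2 eight_neq0 (elimA _ _ _ k C CD hk1) (elimB _ _ _ k C CD hk2)).
Qed.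

Lemma PM_le x n : PhiMax abs k phi x 0 n <= lim ((fun n => PhiMax abs k phi x 0 n) @ \oo).
Proof.
have mono : nondecreasing_seq (fun n => PhiMax abs k phi x 0 n).
  by apply/nondecreasing_seqP => m; rewrite PhiMax0S le_max lexx.
exact: (nondecreasing_cvgn_le mono (H3 x)).
Qed.

Lemma exist_bound x : nrm (f (x *+ 2) - f x *+ 2 - C x)
  <= lim ((fun n => PhiMax abs k phi x 0 n) @ \oo) / abs ((8 * k ^+ 2 * (k ^+ 2 - 1))%:~R).
Proof.
change (nrm (h x - C x) <= lim ((fun n => PhiMax abs k phi x 0 n) @ \oo) / BB).
have L0 : 0 <= lim ((fun n => PhiMax abs k phi x 0 n) @ \oo).
  by apply: le_trans (PM_le x 0); rewrite PhiMax00.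
have iB : 0 <= BB^-1 by rewrite invr_ge0 ltW ?BB_gt0.
apply: real_maxle; first by rewrite divr_ge0 // ltW ?BB_gt0.
move=> e e0; have [N HN] := HC x e e0.
have := HN N (leqnn N) => hN.
rewrite (_ : h x - C x = (h x - s N x) + (s N x - C x)); last by rewrite addrA subrK.
apply: le_trans (nrmD _ _) _; rewrite ge_max !le_max; apply/andP; split; apply/orP; [left|right].
  rewrite nrmB; apply: le_trans (chain N x) _; apply: ler_wpM2r => //; exact: PM_le.
exact: ltW.
Qed.

Lemma pow8 (g : G -> X) : (forall u, g (u *+ 2) = g u *+ 8) ->
  forall n x, g (x *+ (2 ^ n)) = ((8 : K) ^+ n) *: g x.
Proof.
move=> Hg; elim=> [|n IH] x; first by rewrite expn0 mulr1n expr0 scale1r.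
by rewrite expnSr mulrnA Hg IH -scaler_nat scalerA exprSr mulrC.
Qed.

Lemma PMrel x n N : PhiMax abs k phi (x *+ (2 ^ n)) 0 N = abs ((8 : K) ^+ n) * PhiMax abs k phi x n N.
Proof.
elim: N => [|N IH]; first by rewrite PhiMax00 /PhiMax add0n big_geq // mulr0.
rewrite PhiMax0S IH /PhiMax addSn bigmax_recr ?leq_addl //; last by move=> i; apply: Tm_ge0.
rewrite maxr_pMr ?abs_ge0 //; congr (Num.max _ _).
have an : abs ((8 : K) ^+ n) != 0 by rewrite gt_eqF ?a8n_gt0.
have aN : abs ((8 : K) ^+ N) != 0 by rewrite gt_eqF ?a8n_gt0.
rewrite /Tm -mulrnA -expnD addnC exprD absM; field.
by rewrite aN an.
Qed.

Lemma lam_eq x n : lim ((fun N => PhiMax abs k phi x n N) @ \oo) =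
  lim ((fun N => PhiMax abs k phi (x *+ (2 ^ n)) 0 N) @ \oo) * (abs ((8 : K) ^+ n))^-1.
Proof.
have an : abs ((8 : K) ^+ n) != 0 by rewrite gt_eqF ?a8n_gt0.
have -> : (fun N => PhiMax abs k phi x n N) =
   (fun N => PhiMax abs k phi (x *+ (2 ^ n)) 0 N * (abs ((8 : K) ^+ n))^-1).
  by apply/funext => N; rewrite PMrel mulrC mulrA mulVf ?mul1r.
apply/cvg_lim; first exact: Rhausdorff. apply: cvgMl; exact: H3.
Qed.

Lemma uniq_part : (forall x : G,
      (fun i : nat => lim ((fun n : nat => PhiMax abs k phi x i n) @ \oo)) @ \oo --> 0) ->
  forall C' : G -> X, cubic C' ->
  (forall x : G, nrm (f (x *+ 2) - f x *+ 2 - C' x)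
     <= lim ((fun n : nat => PhiMax abs k phi x 0 n) @ \oo)
        / abs ((8 * k ^+ 2 * (k ^+ 2 - 1))%:~R)) ->
  C' = C.
Proof.
move=> HU C' hC' hb; apply/funext => x.
have C'2 : forall u, C' (u *+ 2) = C' u *+ 8.
  move=> u; have := hC' u 0; rewrite !addr0 !subr0 => E.
  apply/eqP; rewrite -subr_eq0; apply/eqP.
  have : (C' (u *+ 2) - C' u *+ 8) *+ 2 = 0.
    have -> : (C' (u *+ 2) - C' u *+ 8) *+ 2 =
      (C' (u *+ 2) + C' (u *+ 2)) - (C' u *+ 2 + C' u *+ 2 + C' u *+ 12) by zring X.
    by rewrite E subrr.
  by move/eqP; rewrite -scaler_nat scaler_eq0 (negbTE two_neq0) /= => /eqP.
have hBn : forall n, nrm (C x - C' x) <=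
    lim ((fun N => PhiMax abs k phi x n N) @ \oo) / BB.
  move=> n; set y := x *+ (2 ^ n).
  have an : (8 : K) ^+ n != 0 by rewrite expf_neq0 // eight_neq0.
  have E : C x - C' x = (((8 : K) ^+ n)^-1) *: (C y - C' y).
    by rewrite /y (pow8 _ C2) (pow8 _ C'2) -scalerBr scalerA mulVf ?scale1r.
  rewrite E nrmZ absV lam_eq -/y.
  rewrite -[X in _ <= X]mulrA [X in _ <= X]mulrCA; apply: ler_wpM2l; first by rewrite invr_ge0 abs_ge0.
  rewrite (_ : C y - C' y = (h y - C' y) - (h y - C y)); last by zring X.
  apply: nrm_suble; first exact: hb.
  exact: exist_bound.
have a0 : 0 <= nrm (C x - C' x) by apply: nrm_ge0.
suff : nrm (C x - C' x) <= 0.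
  move=> hle; have /nrm_eq0 /eqP : nrm (C x - C' x) = 0 by apply/eqP; rewrite eq_le hle a0.
  by rewrite subr_eq0 => /eqP.
apply: real_maxle => // e e0.
have eB : 0 < e * BB by rewrite mulr_gt0 ?BB_gt0.
have [N HN] := small_seq _ (HU x) _ eB.
have hN := HN N (leqnn N).
rewrite le_max; apply/orP; right; apply: le_trans (hBn N) _.
by rewrite ler_pdivrMr ?BB_gt0 // ltW.
Qed.
End Main.


Theorem theorem2p3 (G : zmodType) (R : realType) (K : fieldType) (abs : K -> R)
  (X : lmodType K) (nrm : X -> R) (k : int) (phi : G -> G -> R) (f : G -> X) :
  nonarch_valuation abs -> nontrivial_valuation abs ->
  nonarch_norm abs nrm -> norm_complete nrm ->
  k != 0 -> k != 1 -> k != -1 ->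
  ((k ^+ 2 * (k ^+ 2 - 1))%:~R != 0 :> K) ->
  (forall x y, 0 <= phi x y) ->
  (forall x y : G,
     (fun n : nat => Num.max (phi (x *+ (2 ^ n.+1)) (y *+ (2 ^ n.+1)))
                             (abs (2 : K) * phi (x *+ (2 ^ n)) (y *+ (2 ^ n)))
                     / abs ((8 : K) ^+ n)) @ \oo --> 0) ->
  (forall x : G,
     (fun n : nat => Phi abs k phi (x *+ (2 ^ n))
                     / abs ((8 : K) ^+ n.+1 * (k ^+ 2 * (k ^+ 2 - 1))%:~R))
       @ \oo --> 0) ->
  (forall x : G, cvg ((fun n : nat => PhiMax abs k phi x 0 n) @ \oo)) ->
  (forall x : G, f (- x) = - f x) ->
  (forall x y : G, nrm (Dk k f x y) <= phi x y) ->
  exists C : G -> X,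
    [/\ cubic C,
        (forall x : G,
           nrm (f (x *+ 2) - f x *+ 2 - C x)
             <= lim ((fun n : nat => PhiMax abs k phi x 0 n) @ \oo)
                / abs ((8 * k ^+ 2 * (k ^+ 2 - 1))%:~R))
      & ((forall x : G,
            (fun i : nat => lim ((fun n : nat => PhiMax abs k phi x i n) @ \oo))
              @ \oo --> 0) ->
         forall C' : G -> X, cubic C' ->
           (forall x : G,
              nrm (f (x *+ 2) - f x *+ 2 - C' x)
                <= lim ((fun n : nat => PhiMax abs k phi x 0 n) @ \oo)
                   / abs ((8 * k ^+ 2 * (k ^+ 2 - 1))%:~R)) ->
           C' = C)].
Proof.
move=> hv _ hn hc _ _ _ hm hphi H1 H2 H3 fodd hD.
have [C HC] := @exC G R K abs X nrm k phi f hv hn hm fodd hD hc H2.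
exists C; split.
- by apply: (@Ccubic G R K abs X nrm k phi f) => //.
- by move=> x; apply: (@exist_bound G R K abs X nrm k phi f) => //.
- by move=> HU C'; apply: (@uniq_part G R K abs X nrm k phi f) => //.
Qed.
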